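(* Let $Y$ be a real random variable with $\mathbb E[Y]=0$ such that for some $\theta>0$, $\Pr[|Y|\ge\xi]\le 2e^{-\xi^2\theta^2/2}$ for all $\xi\ge0$. Then for every $a>0$, $$\Pr[Y\ge0]\ge\frac{\operatorname{Var}[Y]}{2a^2}-2e^{-a^2\theta^2/2}\left(1+\sqrt2+\frac{\sqrt{2\pi}}{a\theta}+\frac{1}{a^2\theta^2}\right).$$ *)

(* Defs.v *)
From mathcomp Require Import all_boot all_order all_algebra.
From mathcomp Require Import all_classical all_reals all_analysis.

(* Main.v *)
Require Import Defs.
From mathcomp Require Import all_boot all_order all_algebra.
From mathcomp Require Import all_classical all_reals all_analysis.
From mathcomp Require Import ring lra.
From mathcomp Require Import measurable_realfun.
Import Order.TTheory GRing.Theory Num.Theory.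
Local Open Scope classical_set_scope.
Local Open Scope ring_scope.
Lemma pw_disc (T : Type) (R : realType) (Z : T -> R) (b s : R) (w : T) : 0 < s ->
  ((Num.max (Z w - b) 0)%:E <=
   s%:E * \sum_(k <oo) (\1_[set x | b + k%:R * s <= Z x] w)%:E)%E.
Proof.
move=> s0.
have ge0 : forall k, (0 <= (\1_[set x | b + k%:R * s <= Z x] w : R)%:E)%E.
  by move=> k; rewrite lee_fin indicE; case: (_ \in _).
have [zb|bz] := ltP (Z w) b.
  rewrite (_ : Num.max _ _ = 0); last by apply/max_idPr; rewrite subr_le0 ltW.
  apply: mule_ge0; [by rewrite lee_fin ltW|by apply: nneseries_ge0 => n _ _].
set m := Num.truncn ((Z w - b) / s).
have hm : (Z w - b) / s < m.+1%:R by apply: truncnS_gt.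
have sum1 : (((m.+1)%:R : R)%:E <= \sum_(k <oo) (\1_[set x | b + k%:R * s <= Z x] w)%:E)%E.
  have H := (@nneseries_lim_ge R (fun k => (\1_[set x | b + k%:R * s <= Z x] w)%:E) (fun _ => true) 0 m.+1 (fun n _ _ => ge0 n)). apply: le_trans H.
  rewrite (eq_big_nat _ _ (F2 := fun=> 1%:E)); last first.
    move=> i /andP[_ ilt]; rewrite indicE mem_set //=.
    have : i%:R <= (Z w - b) / s.
      apply: le_trans (_ : m%:R <= _); first by rewrite ler_nat -ltnS.
      by rewrite truncn_le divr_ge0 ?subr_ge0 // ltW.
    by rewrite ler_pdivlMr // lerBrDl.
  by rewrite sumEFin sumr_const_nat subn0.
apply: le_trans (_ : s%:E * (m.+1)%:R%:E <= _)%E; last first.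
  by rewrite lee_pmul2l // lte_fin.
rewrite -EFinM lee_fin ge_max mulr_ge0 ?ltW // ?andbT.
by rewrite mulrC -ltr_pdivrMr.
Qed.

Lemma geo_le (R : realType) (c q : R) : 0 <= c -> 0 <= q < 1 ->
  (\sum_(k <oo) (c * q ^+ k)%:E <= (c / (1 - q))%:E)%E.
Proof.
move=> c0 /andP[q0 q1].
have q1' : 0 < 1 - q by rewrite subr_gt0.
have ps : forall n, \sum_(0 <= i < n) c * q ^+ i = c * (1 - q ^+ n) / (1 - q).
  elim=> [|n IH]; first by rewrite big_nil expr0 subrr mulr0 mul0r.
  rewrite big_nat_recr //= IH exprS.
  by field; rewrite gt_eqF.
apply: lime_le.
  by apply: is_cvg_nneseries => n _ _; rewrite lee_fin mulr_ge0 ?exprn_ge0.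
apply: nearW => n.
rewrite sumEFin ps lee_fin ler_pM2r ?invr_gt0 //.
by rewrite -[leRHS]mulr1 ler_wpM2l // lerBlDr lerDl exprn_ge0.
Qed.

Lemma int_disc d (T : measurableType d) (R : realType) (P : probability T R)
  (Z : T -> R) (mZ : measurable_fun setT Z) (b s c q : R) :
  0 < s -> 0 <= c -> 0 <= q < 1 ->
  (forall k : nat, P [set w | (b + k%:R * s <= Z w)%R] <= (c * q ^+ k)%:E)%E ->
  (\int[P]_w (Num.max (Z w - b) 0)%:E <= (s * (c / (1 - q)))%:E)%E.
Proof.
move=> s0 c0 q01 HP.
have mA : forall k : nat, measurable [set w | (b + k%:R * s <= Z w)%R].
  move=> k; rewrite -[X in measurable X]setTI.
  have -> : [set w | (b + k%:R * s <= Z w)%R] = Z @^-1` `[b + k%:R * s, +oo[.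
    by apply/seteqP; split => w /=; rewrite in_itv /= andbT.
  exact: mZ.
have I0 : forall k (w : T), (0 <= (\1_[set w | (b + k%:R * s <= Z w)%R] w : R)%:E)%E.
  by move=> k w; rewrite lee_fin indicE; case: (_ \in _).
apply: le_trans (_ : \int[P]_w (s%:E * \sum_(k <oo) (\1_[set w | (b + k%:R * s <= Z w)%R] w)%:E) <= _)%E.
  apply: ge0_le_integral => //.
  - by move=> w _; rewrite lee_fin le_max lexx orbT.
  - apply/measurable_EFinP.
    apply: (measurable_realfun.measurable_maxr (f := fun w => Z w - b) (g := cst 0)) => //.
    by apply: measurable_funB.
  - apply: measurable_funeM.
    apply: (ge0_emeasurable_sum (P := xpredT)) => // k _.
    by apply/measurable_EFinP; apply: measurable_indic.
  - by move=> w _; apply: pw_disc.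
rewrite ge0_integralZl_EFin //; last 3 first.
  - by move=> w _; apply: nneseries_ge0 => k _ _.
  - apply: (ge0_emeasurable_sum (P := xpredT)) => // k _.
    by apply/measurable_EFinP; apply: measurable_indic.
  - exact: ltW.
rewrite integral_nneseries //; last first.
  by move=> k; apply/measurable_EFinP; apply: measurable_indic.
rewrite EFinM lee_pmul2l ?lte_fin //.
apply: le_trans (geo_le _ _ _ c0 q01).
apply: lee_nneseries => [k _ _|k _]; first by apply: integral_ge0.
rewrite integral_indic // ?setIT; first exact: HP. 
Qed.

Lemma exp_tail (R : realType) (x A t : R) (k : nat) : 0 <= t -> A + k%:R * t <= x ->
  expR (- x) <= expR (- A) * ((1 + t)^-1) ^+ k.
Proof.
move=> t0 h.
apply: le_trans (_ : expR (- A) * expR (- t) ^+ k <= _).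
  rewrite -expRM_natl -expRD ler_expR mulrN -opprD lerN2 //.
rewrite ler_wpM2l ?expR_ge0 // lerXn2r // ?nnegrE ?expR_ge0 ?invr_ge0 //.
  by apply: addr_ge0.
rewrite expRN lef_pV2 ?posrE ?expR_gt0 ?ltr_wpDr //.
exact: expR_ge1Dx.
Qed.

Lemma tail_sq d (T : measurableType d) (R : realType) (P : probability T R)
  (Y : T -> R) (theta A0 t : R) (k : nat) :
  0 < theta -> 0 <= A0 -> 0 <= t ->
  (forall xi : R, 0 <= xi ->
     (P [set w | (xi <= `|Y w|)%R] <= (2 * expR (- (xi ^+ 2 * theta ^+ 2) / 2))%:E)%E) ->
  (P [set w | (A0 + k%:R * (2 * t / theta ^+ 2) <= Y w ^+ 2)%R]
     <= (2 * expR (- (A0 * theta ^+ 2) / 2) * ((1 + t)^-1) ^+ k)%:E)%E.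
Proof.
move=> th0 A00 t0 H.
set c := A0 + k%:R * (2 * t / theta ^+ 2).
have c0 : 0 <= c.
  apply: addr_ge0 => //; apply: mulr_ge0 => //.
  by apply: divr_ge0; [apply: mulr_ge0 | apply: exprn_ge0; exact: ltW].
have -> : [set w | (c <= Y w ^+ 2)%R] = [set w | (Num.sqrt c <= `|Y w|)%R].
  by apply/seteqP; split => w /=; rewrite -sqrtr_sqr ler_sqrt // sqr_ge0.
apply: le_trans (H _ (sqrtr_ge0 c)) _.
rewrite lee_fin -mulrA ler_pM2l // sqr_sqrtr //.
rewrite !mulNr; apply: exp_tail => //.
rewrite /c mulrDl mulrDl lerD //.
rewrite [X in _ <= X](_ : _ = k%:R * t) //.
by field; rewrite gt_eqF.
Qed.
Lemma pw_main (R : realType) (a y i1 i2 : R) : 0 < a ->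
  (0 <= y -> i1 = 1) -> (a <= `|y| -> i2 = 1) -> 0 <= i1 -> 0 <= i2 ->
  y ^+ 2 + a * Num.max y 0 <= 2 * a ^+ 2 * i1 + 3 * a ^+ 2 * i2
    + 2 * a * Num.max (`|y| - a) 0 + Num.max (y ^+ 2 - a ^+ 2) 0
    + a * Num.max (- y) 0.
Proof.
move=> a0 h1 h2 i10 i20.
have mx1 : forall x : R, x <= Num.max x 0 by move=> x; rewrite le_max lexx.
have mx2 : forall x : R, 0 <= Num.max x 0 by move=> x; rewrite le_max lexx orbT.
have m1 := mx1 (`|y| - a); have m2 := mx2 (`|y| - a).
have m3 := mx1 (y ^+ 2 - a ^+ 2); have m4 := mx2 (y ^+ 2 - a ^+ 2).
have m5 := mx1 (- y); have m6 := mx2 (- y).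
have t1 : 0 <= 2 * a ^+ 2 * i1 by rewrite mulr_ge0 // mulr_ge0 // exprn_ge0 // ltW.
have t2 : 0 <= 3 * a ^+ 2 * i2 by rewrite mulr_ge0 // mulr_ge0 // exprn_ge0 // ltW.
have t3 : 0 <= 2 * a * Num.max (`|y| - a) 0 by rewrite mulr_ge0 // mulr_ge0 // ltW.
have t5 : 0 <= a * Num.max (- y) 0 by rewrite mulr_ge0 // ltW.
have t5' : a * (- y) <= a * Num.max (- y) 0 by rewrite ler_wpM2l // ltW.
have t3' : 2 * a * (`|y| - a) <= 2 * a * Num.max (`|y| - a) 0 by rewrite ler_wpM2l // mulr_ge0 // ltW.
have [y0|y0] := lerP 0 y.
  rewrite h1 // mulr1.
  have ny : `|y| = y by rewrite ger0_norm.
  rewrite ny in h2 t3' m1 m2 t3 *.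
  have [ay|ay] := lerP a y.
    rewrite h2 // mulr1.
    nra.
  nra.
idtac.
have ny : `|y| = - y by rewrite ltr0_norm.
rewrite ny in h2 t3' m1 m2 t3 *.
have [ay|ay] := lerP a (- y).
  rewrite h2 // mulr1.
  nra.
nra.
Qed.

Lemma tail_abs d (T : measurableType d) (R : realType) (P : probability T R)
  (Y : T -> R) (theta a t : R) (k : nat) :
  0 < theta -> 0 < a -> 0 <= t ->
  (forall xi : R, 0 <= xi ->
     (P [set w | (xi <= `|Y w|)%R] <= (2 * expR (- (xi ^+ 2 * theta ^+ 2) / 2))%:E)%E) ->
  (P [set w | (a + k%:R * (t / (a * theta ^+ 2)) <= `|Y w|)%R]
     <= (2 * expR (- (a ^+ 2 * theta ^+ 2) / 2) * ((1 + t)^-1) ^+ k)%:E)%E.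
Proof.
move=> th0 a0 t0 H.
set h := t / (a * theta ^+ 2).
have h0 : 0 <= h by rewrite divr_ge0 // mulr_ge0 ?exprn_ge0 ?ltW.
have xi0 : 0 <= a + k%:R * h by apply: addr_ge0; [exact: ltW | apply: mulr_ge0].
apply: le_trans (H _ xi0) _.
rewrite lee_fin -mulrA ler_pM2l // !mulNr; apply: exp_tail => //.
rewrite -subr_ge0.
have -> : (a + k%:R * h) ^+ 2 * theta ^+ 2 / 2 - (a ^+ 2 * theta ^+ 2 / 2 + k%:R * t)
   = (k%:R * h) ^+ 2 * theta ^+ 2 / 2.
  rewrite /h; field.
  by rewrite !gt_eqF.
by apply: divr_ge0 => //; apply: mulr_ge0; apply: sqr_ge0.
Qed.

Lemma meas_ge d (T : measurableType d) (R : realType) (f : T -> R) (c : R) :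
  measurable_fun setT f -> measurable [set w | (c <= f w)%R].
Proof.
move=> mf; rewrite -[X in measurable X]setTI.
have -> : [set w | (c <= f w)%R] = f @^-1` `[c, +oo[.
  by apply/seteqP; split => w /=; rewrite in_itv /= andbT.
exact: mf.
Qed.

Lemma intD2 d (T : measurableType d) (R : realType) (P : probability T R) (f g : T -> R) :
  measurable_fun setT f -> measurable_fun setT g ->
  (forall w, 0 <= f w) -> (forall w, 0 <= g w) ->
  (\int[P]_w (f w + g w)%:E = \int[P]_w (f w)%:E + \int[P]_w (g w)%:E)%E.
Proof.
move=> mf mg f0 g0.
under eq_integral => w _ do rewrite EFinD.
apply: ge0_integralD => //.
- by move=> w _; rewrite lee_fin.
- exact/measurable_EFinP.
- by move=> w _; rewrite lee_fin.
- exact/measurable_EFinP.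
Qed.

Lemma intZ d (T : measurableType d) (R : realType) (P : probability T R) (k : R) (f : T -> R) :
  0 <= k -> measurable_fun setT f -> (forall w, 0 <= f w) ->
  (\int[P]_w (k * f w)%:E = k%:E * \int[P]_w (f w)%:E)%E.
Proof.
move=> k0 mf f0.
under eq_integral => w _ do rewrite EFinM.
apply: ge0_integralZl_EFin => //.
- by move=> w _; rewrite lee_fin.
- exact/measurable_EFinP.
Qed.

Lemma intC d (T : measurableType d) (R : realType) (P : probability T R) (c : R) :
  (\int[P]_w (c%:E) = c%:E)%E.
Proof.
rewrite (integral_cst P measurableT) -[RHS]mule1; congr (_ * _)%E; exact: probability_setT. Qed.

Ltac meas := repeat (first [ assumption | apply: measurable_funD | apply: measurable_funM | apply: measurable_funB | apply: measurable_maxr | apply: measurable_funX | exact: measurable_cst | apply: measurable_indic | (apply: measurableT_comp; [exact: normr_measurable|]) | (apply: measurableT_comp; [exact: oppr_measurable|]) ]).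

Lemma fin_ge0_le (R : realType) (x : \bar R) (c : R) : (0 <= x)%E -> (x <= c%:E)%E -> x = (fine x)%:E.
Proof.
move=> x0 xc; rewrite fineK // ge0_fin_numE //.
exact: le_lt_trans xc (ltry c).
Qed.

Lemma caseB d (T : measurableType d) (R : realType) (P : probability T R)
  (Y : T -> R) (theta a : R) :
  measurable_fun setT Y -> 0 < theta -> 0 < a -> a * theta < 1 ->
  (forall xi : R, 0 <= xi ->
     (P [set w | (xi <= `|Y w|)%R] <= (2 * expR (- (xi ^+ 2 * theta ^+ 2) / 2))%:E)%E) ->
  (\int[P]_w (Y w ^+ 2)%:E <= (expR (- (a ^+ 2 * theta ^+ 2) / 2)
     * (8 * (a * theta) ^+ 2 + 8 * (a * theta) + 4) / theta ^+ 2)%:E)%E.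
Proof.
move=> mY th0 a0 u1 H.
have eLB : 1 - (a * theta) ^+ 2 / 2 <= expR (- (a ^+ 2 * theta ^+ 2) / 2).
  by apply: le_trans (expR_ge1Dx _); rewrite exprMn mulNr.
set e := expR (- (a ^+ 2 * theta ^+ 2) / 2) in eLB *.
set u := a * theta in u1 eLB *.
have u0 : 0 < u by rewrite mulr_gt0.
pose t : R := 5^-1.
have t0 : 0 <= t by rewrite /t invr_ge0.
have qv : (1 + t)^-1 = 5/6 :> R by rewrite /t; field.
pose s : R := 2 * t / theta ^+ 2.
have s0 : 0 < s by rewrite /s divr_gt0 ?mulr_gt0 ?exprn_gt0 // /t invr_gt0.
have mY2 : measurable_fun setT (fun w => Y w ^+ 2) by meas.
have c0 : 0 <= 2 * (5/6) ^+ 4 :> R by rewrite mulr_ge0 // exprn_ge0.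
have q01 : (0 <= 5/6 :> R) && (5/6 < 1 :> R) by apply/andP; split; lra.
have HP : forall k : nat, (P [set w | (4%:R * s + k%:R * s <= (fun w => Y w ^+ 2) w)%R]
    <= ((2 * (5/6) ^+ 4) * (5/6) ^+ k)%:E)%E.
  move=> k.
  have h := tail_sq _ _ _ P Y theta 0 t (4 + k)%N th0 (lexx 0) t0 H.
  have E1 : 0 + (4 + k)%:R * (2 * t / theta ^+ 2) = 4%:R * s + k%:R * s.
    by rewrite add0r natrD mulrDl.
  rewrite E1 in h; apply: (le_trans h).
  by rewrite lee_fin mul0r oppr0 mul0r expR0 mulr1 qv exprD mulrA.
have J := int_disc _ _ _ P (fun w => Y w ^+ 2) mY2 (4%:R * s) s (2 * (5/6) ^+ 4) (5/6) s0 c0 q01 HP.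
apply: le_trans (_ : \int[P]_w ((4%:R * s) + Num.max (Y w ^+ 2 - 4%:R * s) 0)%:E <= _)%E.
  apply: ge0_le_integral => //.
  - by move=> w _; rewrite lee_fin sqr_ge0.
  - apply/measurable_EFinP; meas.
  - apply/measurable_EFinP; meas.
  - by move=> w _; rewrite lee_fin -lerBlDl le_max lexx.
rewrite intD2; first last.
  - by move=> w; rewrite le_max lexx orbT.
  - by move=> w; rewrite mulr_ge0 // ltW.
  - meas.
  - meas.
rewrite intC.
apply: le_trans (leeD2l _ J) _.
rewrite -EFinD lee_fin.
have -> : 4%:R * s + s * (2 * (5 / 6) ^+ 4 / (1 - 5 / 6)) = (2/5 * (4 + 12 * (5/6) ^+ 4)) / theta ^+ 2.
  by rewrite /s /t; field; rewrite gt_eqF.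
rewrite ler_pM2r ?invr_gt0 ?exprn_gt0 //.
have n1 : 2/5 * (4 + 12 * (5/6) ^+ 4) <= 4 :> R by rewrite !exprS expr0; lra.
have pos : 0 <= 8 * u ^+ 2 + 8 * u + 4 by rewrite !addr_ge0 // ?mulr_ge0 ?sqr_ge0 // ltW.
have p1 : (1 - u ^+ 2 / 2) * (8 * u ^+ 2 + 8 * u + 4) <= e * (8 * u ^+ 2 + 8 * u + 4).
  by rewrite ler_wpM2r.
have h1 : u ^+ 2 <= u by rewrite expr2 ger_pMr // ltW.
have h2 : u ^+ 3 <= u ^+ 2 by rewrite exprS ger_pMl ?exprn_gt0 // ltW.
have h3 : u ^+ 4 <= u ^+ 3 by rewrite exprS ger_pMl ?exprn_gt0 // ltW.
have p2 : 4 <= (1 - u ^+ 2 / 2) * (8 * u ^+ 2 + 8 * u + 4).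
  have -> : (1 - u ^+ 2 / 2) * (8 * u ^+ 2 + 8 * u + 4) = 4 + 8 * u + 6 * u ^+ 2 - 4 * u ^+ 3 - 4 * u ^+ 4.
    by rewrite !exprS expr0; field.
  lra.
lra.
Qed.

Lemma intI d (T : measurableType d) (R : realType) (P : probability T R) (A : set T) :
  measurable A -> (\int[P]_w (\1_A w : R)%:E = P A)%E.
Proof. by move=> mA; rewrite integral_indic // setIT. Qed.

Ltac nn := repeat (first [ done | apply: sqr_ge0 | exact: ler0n | apply: addr_ge0 | apply: mulr_ge0 | apply: exprn_ge0 | (rewrite le_max lexx orbT) | (rewrite indicE; case: (_ \in _); rewrite ?lexx ?ler01) | (apply: ltW; assumption) ]).

Lemma caseA d (T : measurableType d) (R : realType) (P : probability T R)
  (Y : T -> R) (theta a : R) :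
  measurable_fun setT Y -> 0 < theta -> 0 < a -> 1 <= a * theta ->
  (forall xi : R, 0 <= xi ->
     (P [set w | (xi <= `|Y w|)%R] <= (2 * expR (- (xi ^+ 2 * theta ^+ 2) / 2))%:E)%E) ->
  (\int[P]_w (Y w)%:E = 0)%E ->
  (\int[P]_w (Y w ^+ 2)%:E <= (2 * a ^+ 2 * fine (P [set w | (0 <= Y w)%R])
     + expR (- (a ^+ 2 * theta ^+ 2) / 2)
     * (8 * (a * theta) ^+ 2 + 8 * (a * theta) + 4) / theta ^+ 2)%:E)%E.
Proof.
move=> mY th0 a0 u1 H EY.
set e := expR (- (a ^+ 2 * theta ^+ 2) / 2).
have e0 : 0 < e by apply: expR_gt0.
set S := [set w | (0 <= Y w)%R].
set A := [set w | (a <= `|Y w|)%R].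
have mS : measurable S by apply: meas_ge.
have mYa : measurable_fun setT (fun w => `|Y w|) by meas.
have mA : measurable A by apply: (meas_ge _ _ _ (fun w => `|Y w|)).
have mY2 : measurable_fun setT (fun w => Y w ^+ 2) by meas.
pose t : R := 5^-1.
have t0 : 0 <= t by rewrite /t invr_ge0.
have qv : (1 + t)^-1 = 5/6 :> R by rewrite /t; field.
pose h : R := t / (a * theta ^+ 2).
have h0 : 0 < h by rewrite /h divr_gt0 ?mulr_gt0 ?exprn_gt0 // /t invr_gt0.
pose s : R := 2 * t / theta ^+ 2.
have s0 : 0 < s by rewrite /s divr_gt0 ?mulr_gt0 ?exprn_gt0 // /t invr_gt0.
have c0 : 0 <= 2 * e by rewrite mulr_ge0 // ltW.
have q01 : (0 <= 5/6 :> R) && (5/6 < 1 :> R) by apply/andP; split; lra.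
have HP1 : forall k : nat, (P [set w | (a + k%:R * h <= (fun w => `|Y w|) w)%R]
    <= ((2 * e) * (5/6) ^+ k)%:E)%E.
  by move=> k; have := tail_abs _ _ _ P Y theta a t k th0 a0 t0 H; rewrite qv.
have HP2 : forall k : nat, (P [set w | (a ^+ 2 + k%:R * s <= (fun w => Y w ^+ 2) w)%R]
    <= ((2 * e) * (5/6) ^+ k)%:E)%E.
  by move=> k; have := tail_sq _ _ _ P Y theta (a ^+ 2) t k th0 (sqr_ge0 a) t0 H; rewrite qv.
have J1 := int_disc _ _ _ P (fun w => `|Y w|) mYa a h (2 * e) (5/6) h0 c0 q01 HP1.
have J2 := int_disc _ _ _ P (fun w => Y w ^+ 2) mY2 (a ^+ 2) s (2 * e) (5/6) s0 c0 q01 HP2.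
move: J1 J2; cbv beta => J1 J2.
have PA : (P A <= (2 * e)%:E)%E := H a (ltW a0).
set Ip := (\int[P]_w (Num.max (Y w) 0)%:E)%E.
set In := (\int[P]_w (Num.max (- Y w) 0)%:E)%E.
set J1v := (\int[P]_w (Num.max (`|Y w| - a) 0)%:E)%E in J1 *.
set J2v := (\int[P]_w (Num.max (Y w ^+ 2 - a ^+ 2) 0)%:E)%E in J2 *.
have InF : In \is a fin_num.
  rewrite ge0_fin_numE; last by apply: integral_ge0 => w _; rewrite lee_fin; nn.
  apply: (le_lt_trans _ (ltry (a + h * (2 * e / (1 - 5/6))))).
  apply: le_trans (_ : \int[P]_w (a + Num.max (`|Y w| - a) 0)%:E <= _)%E.
    apply: ge0_le_integral => //.
    - by move=> w _; rewrite lee_fin; nn.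
    - apply/measurable_EFinP; meas.
    - apply/measurable_EFinP; meas.
    - move=> w _; rewrite lee_fin ge_max; apply/andP; split; last by nn.
      rewrite -lerBlDl; apply: le_trans (_ : `|Y w| - a <= _); last by rewrite le_max lexx.
      by rewrite lerD2r -normrN ler_norm.
  rewrite (intD2 _ _ _ P (fun=> a) (fun w => Num.max (`|Y w| - a) 0)); [|meas|meas|by move=> w; nn|by move=> w; nn].
  by rewrite intC EFinD; apply: leeD2l.
have EIp : Ip = In.
  have h00 : (Ip - In = 0)%E.
    rewrite -EY (integralE _ _ (fun w => (Y w)%:E)); congr (_ - _)%E.
      by apply: eq_integral => w _; rewrite funeposE EFin_max.
    by apply: eq_integral => w _; rewrite funenegE EFin_max EFinN.
  by rewrite -[Ip](subeK _ InF) h00 add0e.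
have pw : forall w, Y w ^+ 2 + a * Num.max (Y w) 0 <= 2 * a ^+ 2 * \1_S w + 3 * a ^+ 2 * \1_A w
    + 2 * a * Num.max (`|Y w| - a) 0 + Num.max (Y w ^+ 2 - a ^+ 2) 0
    + a * Num.max (- Y w) 0.
  { move=> w; apply: pw_main => //. all: try by move=> hy; rewrite indicE mem_set. all: by nn. }
have L : (\int[P]_w (Y w ^+ 2 + a * Num.max (Y w) 0)%:E)%E = (\int[P]_w (Y w ^+ 2)%:E + a%:E * Ip)%E.
  { rewrite (intD2 _ _ _ P (fun w => Y w ^+ 2) (fun w => a * Num.max (Y w) 0)); last 4 first. all: try (by meas). all: try (by move=> w; nn).
  rewrite intZ //; [exact: ltW|meas|move=> w; nn]. }
have RR : (\int[P]_w (2 * a ^+ 2 * \1_S w + 3 * a ^+ 2 * \1_A w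
    + 2 * a * Num.max (`|Y w| - a) 0 + Num.max (Y w ^+ 2 - a ^+ 2) 0
    + a * Num.max (- Y w) 0)%:E)%E
   = ((2 * a ^+ 2)%:E * P S + (3 * a ^+ 2)%:E * P A + (2 * a)%:E * J1v + J2v + a%:E * In)%E.
  { rewrite !intD2.
  all: try (by meas).
  all: try (by move=> w; nn).
  rewrite !intZ.
  all: try (by meas).
  all: try (by move=> w; nn).
  all: try (by apply: ltW).
  all: try (by nn).
  rewrite !intI //. }
have main : (\int[P]_w (Y w ^+ 2)%:E + a%:E * Ip <= (2 * a ^+ 2)%:E * P S
    + (3 * a ^+ 2)%:E * P A + (2 * a)%:E * J1v + J2v + a%:E * In)%E.
  rewrite -L -RR; apply: ge0_le_integral => //.
  - by move=> w _; rewrite lee_fin; nn.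
  - apply/measurable_EFinP; meas.
  - apply/measurable_EFinP; meas.
  - by move=> w _; rewrite lee_fin.
have aInF : (a%:E * In)%E \is a fin_num by rewrite fin_numM.
rewrite EIp leeD2rE // in main.
apply: le_trans main _.
set p := fine (P S).
have PSf : P S = p%:E by rewrite /p fineK // fin_num_measure.
rewrite PSf -EFinM.
apply: le_trans (_ : ((2 * a ^+ 2 * p)%:E + (3 * a ^+ 2)%:E * (2 * e)%:E
   + (2 * a)%:E * (h * (2 * e / (1 - 5 / 6)))%:E + (s * (2 * e / (1 - 5 / 6)))%:E <= _)%E).
  apply: leeD; last exact: J2.
  apply: leeD; last by apply: lee_wpmul2l => //; rewrite lee_fin mulr_ge0 // ltW.
  apply: leeD => //.
  by apply: lee_wpmul2l => //; rewrite lee_fin mulr_ge0 // exprn_ge0 // ltW.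
rewrite -!EFinM -!EFinD lee_fin -!addrA lerD2l.
have -> : 3 * a ^+ 2 * (2 * e) + (2 * a * (h * (2 * e / (1 - 5 / 6))) + s * (2 * e / (1 - 5 / 6)))
   = e * (6 * (a * theta) ^+ 2 + 48 / 5) / theta ^+ 2.
  by rewrite /h /s /t; field; rewrite !gt_eqF.
rewrite ler_pM2r ?invr_gt0 ?exprn_gt0 // ler_pM2l //.
nra.
Qed.

Theorem lemma6 (d : measure_display) (T : measurableType d) (R : realType)
  (P : probability T R) (Y : {RV P >-> R}) (theta : R) :
  ('E_P[Y] = 0)%E ->
  0 < theta ->
  (forall xi : R, 0 <= xi ->
     (P [set w | (xi <= `|Y w|)%R] <= (2 * expR (- (xi ^+ 2 * theta ^+ 2) / 2))%:E)%E) ->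
  forall a : R, 0 < a ->
  ('V_P[Y] * ((2 * a ^+ 2)^-1)%:E
     - (2 * expR (- (a ^+ 2 * theta ^+ 2) / 2) *
        (1 + Num.sqrt 2 + Num.sqrt (2 * pi) / (a * theta)
           + 1 / (a ^+ 2 * theta ^+ 2)))%:E
   <= P [set w | (0 <= Y w)%R])%E.
Proof.
move=> EY th0 H a a0.
have mY : measurable_fun setT Y := measurable_funPT Y.
have EY' : (\int[P]_w (Y w)%:E = 0)%E by rewrite -expectation_def.
have V2 : 'V_P[Y] = (\int[P]_w (Y w ^+ 2)%:E)%E.
  rewrite /variance covariance.unlock EY /= expectation.unlock.
  by apply: eq_integral => w _; rewrite !fctE /= subr0 expr2.
set e := expR (- (a ^+ 2 * theta ^+ 2) / 2).
have e0 : 0 < e by apply: expR_gt0.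
set C := 1 + Num.sqrt 2 + Num.sqrt (2 * pi) / (a * theta) + 1 / (a ^+ 2 * theta ^+ 2).
have u0 : 0 < a * theta by rewrite mulr_gt0.
have s2 : 1 <= Num.sqrt 2 :> R by rewrite -{1}sqrtr1 ler_wsqrtr // ler1n.
have s2pi : 2 <= Num.sqrt (2 * pi) :> R.
  apply: le_trans (_ : Num.sqrt (2 ^+ 2) <= _); first by rewrite sqrtr_sqr ger0_norm.
  have hp := @pi_ge2 R; rewrite ler_wsqrtr // expr2; lra.
have Cge : 2 + 2 / (a * theta) + 1 / (a ^+ 2 * theta ^+ 2) <= C.
  have hd : 2 / (a * theta) <= Num.sqrt (2 * pi) / (a * theta) by rewrite ler_pM2r // invr_gt0.
  rewrite /C; lra.
have KB : e * (8 * (a * theta) ^+ 2 + 8 * (a * theta) + 4) / theta ^+ 2 <= 4 * a ^+ 2 * e * C.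
  apply: le_trans (_ : 4 * a ^+ 2 * e * (2 + 2 / (a * theta) + 1 / (a ^+ 2 * theta ^+ 2)) <= _).
    rewrite le_eqVlt; apply/orP; left; apply/eqP; field; rewrite !gt_eqF //.
  by rewrite ler_wpM2l // mulr_ge0 // ?mulr_ge0 // ?exprn_ge0 // ltW.
set S := [set w | (0 <= Y w)%R].
have KC : (\int[P]_w (Y w ^+ 2)%:E <= (2 * a ^+ 2 * fine (P S)
     + e * (8 * (a * theta) ^+ 2 + 8 * (a * theta) + 4) / theta ^+ 2)%:E)%E.
  have [u1|u1] := lerP 1 (a * theta).
    exact: caseA.
  apply: le_trans (caseB _ _ _ P Y theta a mY th0 a0 u1 H) _.
  by rewrite lee_fin lerDr mulr_ge0 ?fine_ge0 // mulr_ge0 // exprn_ge0 // ltW.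
have I0 : (0 <= \int[P]_w (Y w ^+ 2)%:E)%E by apply: integral_ge0 => w _; rewrite lee_fin sqr_ge0.
have Eq := fin_ge0_le _ _ _ I0 KC.
rewrite V2 Eq.
rewrite Eq lee_fin in KC.
set v := fine _ in KC *.
have PSf : P S = (fine (P S))%:E.
  by rewrite fineK //; apply: fin_num_measure; apply: meas_ge.

rewrite PSf.
set p := fine (P S) in KC *.
rewrite -EFinM -EFinB lee_fin lerBlDr ler_pdivrMr ?mulr_gt0 ?exprn_gt0 //.
have : v <= 2 * a ^+ 2 * p + 4 * a ^+ 2 * e * C by lra.
move=> hv; apply: (le_trans hv); rewrite le_eqVlt; apply/orP; left; apply/eqP; ring.
Qed.
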